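(* Let $\Lambda\subset Y$ satisfy condition (★), let $J$ be generic as in the context, and let $e\ge2$ be an integer with $|a|\ge e$ for every Reeb chord $a$ of $\Lambda$. Then for every integer $p$ with $1\le p\le 3e-1$, $$\dim_{\mathbb{Z}/2}\mathrm{LCH}_p(\Lambda)=\dim\ker\big((\delta_J)_*:HL_p(\Lambda)\to HL^2_{p-1}(\Lambda)\big)+\dim\operatorname{coker}\big((\delta_J)_*:HL_{p+1}(\Lambda)\to HL^2_p(\Lambda)\big).$$
   Context: Let $(Y,\alpha)$ be a $(2n-1)$-dimensional contact manifold with a diffeomorphism $Y\cong\mathbb{R}\times P$ pulling back $dz+\lambda_P$ to $\alpha$, where $(P,\lambda_P)$ is the completion of a compact Liouville domain with $2c_1(TP)=0$ and $H_1(P;\mathbb{Z})=0$. Let $\Lambda\subset Y$ be a compact connected Legendrian submanifold with vanishing Maslov class, all Reeb chords non-degenerate, each Reeb chord $a$ graded by $|a|=\mu(a)-1$ ($\mu$ the Conley–Zehnder index defined via capping paths in $\Lambda$). For a generic almost complex structure $J$ on $\mathbb{R}\times Y$ that is compatible with $d(e^r\alpha)$, $\mathbb{R}$-invariant, preserves $\xi=\ker\alpha$, sends $\partial_r$ to the Reeb vector field, and equals a fixed such structure outside a compact set, $\mathcal{M}_J(a;b_1,\dots,b_m)$ denotes the moduli space, modulo $\mathbb{R}$-translation and conformal reparametrization, of $J$-holomorphic disks with boundary punctures $p_0,\dots,p_m$ (clockwise) and boundary on $\mathbb{R}\times\Lambda$, positively asymptotic at $p_0$ to the strip over $a$ and negatively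 asymptotic at $p_k$ to the strip over $b_k$; for $(b_1,\dots,b_m)\ne(a)$ it is a manifold of dimension $|a|-1-\sum_k|b_k|$, compact when $0$-dimensional. The Chekanov–Eliashberg DGA $(\mathcal{A}_*(\Lambda),\partial_J)$ is the unital free noncommutative graded $\mathbb{Z}/2$-algebra on the Reeb chords with $\partial_J a=\sum_{m\ge0}\sum_{|b_1|+\dots+|b_m|=|a|-1}\#_{\mathbb{Z}/2}\mathcal{M}_J(a;b_1,\dots,b_m)\,b_1\cdots b_m$, extended by the Leibniz rule; $\partial_J^2=0$; $\mathrm{LCH}_*(\Lambda)$ is its homology. Condition (★): $|a|\ge2$ for every Reeb chord $a$ of $\Lambda$ that is homotopic, through paths with endpoints in $\Lambda$, to a constant path in $\Lambda$. Under (★): $CL_*(\Lambda)$ is the graded $\mathbb{Z}/2$-vector space spanned by the Reeb chords ($a$ in degree $|a|$), $d_Ja=\sum_{|b|=|a|-1}\#_{\mathbb{Z}/2}\mathcal{M}_J(a;b)\,b$, and $\delta_Ja=\sum_{|b_1|+|b_2|=|a|-1}\#_{\mathbb{Z}/2}\mathcal{M}_J(a;b_1,b_2)\,b_1\otimes b_2$; then $d_J^2=0$ and $\delta_J:CL_{*+1}(\Lambda)\to(CL(\Lambda)^{\otimes2})_*$ is a chain map, where $CL^{\otimes2}$ carries $d_J\otimes\mathrm{id}+\mathrm{id}\otimes d_J$. $HL_*(\Lambda)$ is the homology of $(CL_*(\Lambda),d_J)$, $HL^2_*(\Lambda)$ that of $CL^{\otimes2}$, and $(\delta_J)_*:HL_{*+1}(\Lambda)\to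 HL^2_*(\Lambda)$ the induced map. *)

(* Defs.v *)
From HB Require Import structures.
From mathcomp Require Import all_boot all_order all_algebra.
Set Implicit Arguments.
Unset Strict Implicit.
Unset Printing Implicit Defensive.
Import GRing.Theory.
Local Open Scope ring_scope.

Section LCH.
(* A   : the (finite) set of Reeb chords of Lambda
   g   : the grading a |-> |a|
   c a w : the mod-2 count #M_J(a; b_1,...,b_m) for the word w = b_1...b_m *)
Variables (A : finType) (g : A -> nat) (c : A -> seq A -> bool).

Definition weight (w : seq A) : nat := \sum_(a <- w) g a.

Fixpoint wordsLen (k : nat) : seq (seq A) :=
  if k is k'.+1 then [seq a :: w | a <- enum A, w <- wordsLen k'] else [:: [::]].

(* basis of the degree-p part of A_*(Lambda): words of total degree p
   (of length <= p; these are all of them since every |a| >= 1 under the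
   hypotheses of the theorem) *)
Definition words (p : nat) : seq (seq A) :=
  [seq w <- flatten [seq wordsLen k | k <- iota 0 p.+1] | weight w == p].
(* basis of CL_p (single chords) and of (CL^{(x)2})_p (pairs b1 (x) b2) *)
Definition words1 (p : nat) := [seq w <- words p | size w == 1%N].
Definition words2 (p : nat) := [seq w <- words p | size w == 2%N].

(* coefficient of the word w in partial_J a: counted only when
   |b_1|+...+|b_m| = |a| - 1 *)
Definition cnt (a : A) (w : seq A) : 'F_2 :=
  (((weight w).+1 == g a) && c a w)%:R.

(* coefficient of v in partial_J u (Leibniz rule):
   sum over decompositions u = x a y, v = x w y of cnt a w *)
Definition dcoef (u v : seq A) : 'F_2 :=
  \sum_(i < size u)
    match drop i u with
    | a :: y =>
      \sum_(j < (size v).+1) \sum_(l < (size v).+1)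
        ((take i u == take j v) && (j + l <= size v)%N
           && (y == drop (j + l) v))%:R * cnt a (take l (drop j v))
    | [::] => 0
    end.

(* matrices act on row vectors: x *m M *)
Definition Dfull (p q : nat) : 'M['F_2]_(size (words p), size (words q)) :=
  \matrix_(i, j) dcoef (nth [::] (words p) i) (nth [::] (words q) j).

Definition d1coef (u v : seq A) : 'F_2 :=
  match u, v with [:: a], [:: b] => cnt a [:: b] | _, _ => 0 end.
Definition dJ (p q : nat) : 'M['F_2]_(size (words1 p), size (words1 q)) :=
  \matrix_(i, j) d1coef (nth [::] (words1 p) i) (nth [::] (words1 q) j).

Definition d2coef (u v : seq A) : 'F_2 :=
  match u, v with
  | [:: a1; a2], [:: b1; b2] =>
      (a2 == b2)%:R * cnt a1 [:: b1] + (a1 == b1)%:R * cnt a2 [:: b2]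
  | _, _ => 0
  end.
Definition dJ2 (p q : nat) : 'M['F_2]_(size (words2 p), size (words2 q)) :=
  \matrix_(i, j) d2coef (nth [::] (words2 p) i) (nth [::] (words2 q) j).

Definition deltacoef (u v : seq A) : 'F_2 :=
  match u, v with [:: a], [:: b1; b2] => cnt a [:: b1; b2] | _, _ => 0 end.
Definition deltaJ (p q : nat) : 'M['F_2]_(size (words1 p), size (words2 q)) :=
  \matrix_(i, j) deltacoef (nth [::] (words1 p) i) (nth [::] (words2 q) j).

(* dimension of homology ker Out / im In *)
Definition hdim m n k (In : 'M['F_2]_(m, n)) (Out : 'M['F_2]_(n, k)) : nat :=
  (\rank (kermx Out) - \rank In)%N.

Definition LCHdim (p : nat) : nat := hdim (Dfull p.+1 p) (Dfull p p.-1).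

(* Z = cycles in CL_s, B = boundaries in CL_s, B2 = boundaries in CL^2_{s-1},
   Z2 = cycles in CL^2_{s-1}.
   dim ker  = dim {z in Z | delta z in B2} - dim B
   dim coker = dim Z2 - dim (delta Z + B2). *)
Definition kerDelta (s : nat) : nat :=
  let Z := kermx (dJ s s.-1) in
  let B := dJ s.+1 s in
  let B2 := dJ2 s s.-1 in
  (\rank (kermx (Z *m deltaJ s s.-1 *m cokermx B2) *m Z) - \rank B)%N.

Definition cokerDelta (s : nat) : nat :=
  let Z := kermx (dJ s s.-1) in
  let B2 := dJ2 s s.-1 in
  let Z2 := kermx (dJ2 s.-1 s.-2) in
  (\rank Z2 - \rank (Z *m deltaJ s s.-1 + B2)%MS)%N.

End LCH.

(* Main.v *)
Require Import Defs.
From mathcomp Require Import all_boot all_order all_algebra.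
From mathcomp Require Import zify.
Import GRing.Theory.
Local Open Scope ring_scope.

Set Implicit Arguments.
Unset Strict Implicit.
Section Abs.
Variable F : fieldType.

Lemma eqmx_rank_le m1 m2 n (A : 'M[F]_(m1,n)) (B : 'M[F]_(m2,n)) :
  (A <= B)%MS -> (B <= A)%MS -> \rank A = \rank B.
Proof. by move=> /mxrankS h1 /mxrankS h2; apply/eqP; rewrite eqn_leq h1 h2. Qed.

Lemma Kchar n1 a1 a2 n2 k (d : 'M[F]_(n1,a1)) (de : 'M[F]_(n1,a2))
   (d2 : 'M[F]_(n2,a2)) (x : 'M[F]_(k,n1)) :
  (x <= kermx (kermx d *m de *m cokermx d2) *m kermx d)%MS =
  (x <= kermx d)%MS && (x *m de <= d2)%MS.
Proof.
apply/idP/andP.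
  case/submxP=> v ->; split.
    by rewrite mulmxA submxMl.
  rewrite submxE; set M := kermx d *m de *m cokermx d2.
  have -> : v *m (kermx M *m kermx d) *m de *m cokermx d2 = v *m (kermx M *m M).
    by rewrite /M !mulmxA.
  by rewrite mulmx_ker mulmx0.
case=> /submxP [u ->] h; apply: submxMr; apply/sub_kermxP.
by move: h; rewrite submxE => /eqP h; rewrite mulmxA mulmxA h.
Qed.

Lemma rowfree_T n m (E : 'M[F]_(n,m)) : E *m E^T = 1%:M -> row_free E.
Proof.
move=> h; rewrite /row_free; apply/eqP/eqP; rewrite eqn_leq rank_leq_row /=.
by have := mxrankM_maxl E E^T; rewrite h mxrank1.
Qed.

Lemma ext1 k N0 a1 a2 (F1 : 'M[F]_(a1,N0)) (F2 : 'M[F]_(a2,N0)) (x : 'M[F]_(k,a1)) y :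
  F1 *m F1^T = 1%:M -> F2 *m F1^T = 0 -> (x *m F1 + y *m F2) *m F1^T = x.
Proof. by move=> f11 f21; rewrite mulmxDl -!mulmxA f11 f21 mulmx0 addr0 mulmx1. Qed.
Lemma ext2 k N0 a1 a2 (F1 : 'M[F]_(a1,N0)) (F2 : 'M[F]_(a2,N0)) (x : 'M[F]_(k,a1)) y :
  F2 *m F2^T = 1%:M -> F1 *m F2^T = 0 -> (x *m F1 + y *m F2) *m F2^T = y.
Proof. by move=> f22 f12; rewrite mulmxDl -!mulmxA f22 f12 mulmx0 add0r mulmx1. Qed.

Theorem abstract_main N0 N Ns n1 n2 a1 a2 s1 s2
  (D : 'M[F]_(N,N0)) (Ds : 'M[F]_(Ns,N))
  (E1 : 'M[F]_(n1,N)) (E2 : 'M[F]_(n2,N))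
  (F1 : 'M[F]_(a1,N0)) (F2 : 'M[F]_(a2,N0))
  (G1 : 'M[F]_(s1,Ns)) (G2 : 'M[F]_(s2,Ns))
  (d : 'M[F]_(n1,a1)) (de : 'M[F]_(n1,a2)) (d2 : 'M[F]_(n2,a2))
  (ds : 'M[F]_(s1,n1)) (des : 'M[F]_(s1,n2)) (d2s : 'M[F]_(s2,n2)) :
  E1 *m D = d *m F1 + de *m F2 ->
  E2 *m D = d2 *m F2 ->
  G1 *m Ds = ds *m E1 + des *m E2 ->
  G2 *m Ds = d2s *m E2 ->
  (Ds <= G1 *m Ds + G2 *m Ds)%MS ->
  E1 *m E1^T = 1%:M -> E2 *m E2^T = 1%:M -> E1 *m E2^T = 0 -> E2 *m E1^T = 0 ->
  E1^T *m E1 + E2^T *m E2 = 1%:M ->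
  F1 *m F1^T = 1%:M -> F2 *m F2^T = 1%:M -> F1 *m F2^T = 0 -> F2 *m F1^T = 0 ->
  Ds *m D = 0 ->
  (\rank (kermx D) - \rank Ds =
   (\rank (kermx (kermx d *m de *m cokermx d2) *m kermx d) - \rank ds) +
   (\rank (kermx d2) - \rank (kermx ds *m des + d2s)%MS))%N.
Proof.
move=> H1 H2 H3 H4 H5 e11 e22 e12 e21 eI f11 f22 f12 f21 H8.
have HG1: (ds *m d = 0) /\ (ds *m de + des *m d2 = 0).
  have: G1 *m Ds *m D = 0 by rewrite -mulmxA H8 mulmx0.
  rewrite H3 mulmxDl -!mulmxA H1 H2 mulmxDr !mulmxA -addrA -mulmxDl.
  move=> h; split.
    by have := congr1 (mulmx^~ F1^T) h; rewrite /= mul0mx ext1.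
  by have := congr1 (mulmx^~ F2^T) h; rewrite /= mul0mx ext2.
case: HG1 => dd chain.
have d2d2 : d2s *m d2 = 0.
  have: G2 *m Ds *m D = 0 by rewrite -mulmxA H8 mulmx0.
  rewrite H4 -mulmxA H2 mulmxA => h.
  by have := congr1 (mulmx^~ F2^T) h; rewrite /= mul0mx -mulmxA f22 mulmx1.
set Z := kermx d; set K := kermx (Z *m de *m cokermx d2) *m Z.
set S := (kermx ds *m des + d2s)%MS.
have rk1 : \rank (kermx D) = (\rank K + \rank (kermx d2))%N.
  rewrite -(mxrank_mul_ker (kermx D) E1^T); congr (_ + _)%N.
    apply: eqmx_rank_le.
    - rewrite /K Kchar; set X := kermx D.
      have XD : X *m D = 0 by apply: mulmx_ker.
      have : X *m (E1^T *m E1 + E2^T *m E2) *m D = 0 by rewrite eI mulmx1.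
      rewrite mulmxDr mulmxDl -!mulmxA H1 H2 !mulmxA mulmxDr !mulmxA -addrA -mulmxDl => h.
      apply/andP; split.
        apply/sub_kermxP.
        by have := congr1 (mulmx^~ F1^T) h; rewrite /= mul0mx ext1.
      have := congr1 (mulmx^~ F2^T) h; rewrite /= mul0mx ext2 //.
      move/eqP; rewrite addr_eq0 => /eqP ->; rewrite -mulNmx; exact: submxMl.
    - have := submx_refl K; rewrite {2}/K Kchar => /andP [/sub_kermxP Kd /submxP [W KW]].
      clearbody K; set Y := K *m E1 - W *m E2.
      have YD : Y *m D = 0.
        by rewrite /Y mulmxBl -!mulmxA H1 H2 mulmxDr !mulmxA Kd mul0mx add0r -KW subrr.
      have -> : K = Y *m E1^T.
        by rewrite /Y mulmxBl -!mulmxA e11 e21 mulmx0 subr0 mulmx1.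
      by apply: submxMr; apply/sub_kermxP.
  rewrite -(mxrankMfree _ (rowfree_T e22)).
  apply: eqmx_rank_le.
  - set I := (kermx D :&: kermx E1^T)%MS.
    have := submx_refl I; rewrite sub_capmx => /andP [/sub_kermxP ID /sub_kermxP IE].
    have II : I = I *m E2^T *m E2 by rewrite -mulmxA -[LHS]mulmx1 -eI mulmxDr mulmxA IE mul0mx add0r.
    rewrite II; apply: submxMr; apply/sub_kermxP.
    have := ID; rewrite {1}II -mulmxA H2 mulmxA => h.
    by have := congr1 (mulmx^~ F2^T) h; rewrite /= mul0mx -mulmxA f22 mulmx1.
  - rewrite sub_capmx; apply/andP; split; apply/sub_kermxP.
      by rewrite -mulmxA H2 mulmxA mulmx_ker mul0mx.
    by rewrite -mulmxA e21 mulmx0.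
have rk2 : \rank Ds = (\rank ds + \rank S)%N.
  rewrite -(mxrank_mul_ker Ds E1^T); congr (_ + _)%N.
    apply: eqmx_rank_le.
    - case/sub_addsmxP: H5 => u ->.
      rewrite mulmxDl H3 H4 -!mulmxA e21 !mulmx0 addr0 mulmxDl -!mulmxA e11 e21 mulmx0 addr0 mulmx1.
      exact: submxMl.
    - have -> : ds = G1 *m Ds *m E1^T.
        by rewrite H3 mulmxDl -!mulmxA e11 e21 mulmx0 addr0 mulmx1.
      by apply: submxMr; apply: submxMl.
  rewrite -(mxrankMfree _ (rowfree_T e22)).
  apply: eqmx_rank_le.
  - set I := (Ds :&: kermx E1^T)%MS.
    have := submx_refl I; rewrite sub_capmx => /andP [IDs /sub_kermxP IE].
    have := submx_trans IDs H5; case/sub_addsmxP => v Iv.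
    have Iv' : I = (v.1 *m ds) *m E1 + (v.1 *m des + v.2 *m d2s) *m E2.
      by rewrite Iv H3 H4 mulmxDr mulmxDl !mulmxA addrA.
    have v1ds : v.1 *m ds = 0.
      have := IE; rewrite Iv' mulmxDl -!mulmxA e11 e21 !mulmx0 addr0 mulmx1 //.
    have := v1ds => /sub_kermxP /submxP [w wv].
    rewrite Iv' v1ds mul0mx add0r; apply: submxMr.
    by rewrite /S; apply: addmx_sub_adds; [rewrite wv -mulmxA submxMl | apply: submxMl].
  - have := submx_refl S; rewrite {2}/S; case/sub_addsmxP => u Su.
    rewrite sub_capmx; apply/andP; split; last first.
      by apply/sub_kermxP; rewrite -mulmxA e21 mulmx0.
    have -> : S *m E2 = (u.1 *m kermx ds) *m (G1 *m Ds) + u.2 *m (G2 *m Ds).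
      have k0 : u.1 *m kermx ds *m (ds *m E1) = 0.
        by rewrite mulmxA -(mulmxA u.1) mulmx_ker mulmx0 mul0mx.
      rewrite H3 H4 Su mulmxDl mulmxDr k0 add0r.
      by rewrite !mulmxA.
    by apply: addmx_sub; apply: submx_trans (submxMl _ _) _; apply: submxMl.
rewrite rk1 rk2.
have le1 : (\rank ds <= \rank K)%N.
  apply: mxrankS; rewrite /K Kchar; apply/andP; split.
    by apply/sub_kermxP.
  have -> : ds *m de = - des *m d2 by rewrite mulNmx; apply: (addrI (des *m d2)); rewrite addrN addrC chain.
  exact: submxMl.
have le2 : (\rank S <= \rank (kermx d2))%N.
  apply: mxrankS; rewrite /S addsmx_sub; apply/andP; split; apply/sub_kermxP => //.
  rewrite -mulmxA.
  have -> : des *m d2 = - (ds *m de) by apply: (addrI (ds *m de)); rewrite addrN chain.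
  by rewrite mulmxN mulmxA mulmx_ker mul0mx oppr0.
lia.
Qed.
End Abs.
Unset Implicit Arguments.
Set Strict Implicit.
Section C.
Variables (A : finType) (g : A -> nat) (c : A -> seq A -> bool) (e : nat).
Hypothesis he : (2 <= e)%N.
Hypothesis hg : forall a, (e <= g a)%N.

Lemma size_wordsLen k w : w \in wordsLen A k -> size w = k.
Proof.
elim: k w => [|k IH] w /=; first by rewrite mem_seq1 => /eqP ->.
by case/allpairsP => [[a w'] [_ /= hw ->]] /=; rewrite (IH _ hw).
Qed.

Lemma uniq_wordsLen k : uniq (wordsLen A k).
Proof.
elim: k => [|k IH] //=.
apply: allpairs_uniq => //; first exact: enum_uniq.
by move=> [a w] [a' w'] _ _ /= [-> ->].
Qed.

Lemma uniq_flat s : uniq s -> uniq (flatten [seq wordsLen A k | k <- s]).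
Proof.
elim: s => [|k s IH] //= /andP [ks us].
rewrite cat_uniq uniq_wordsLen IH // andbT.
apply/hasPn => w /flattenP [t /mapP [k' k's ->]] wk'.
apply/negP => wk; move: ks; rewrite -(size_wordsLen _ _ wk) (size_wordsLen _ _ wk').
by rewrite k's.
Qed.

Lemma uniq_words q : uniq (words g q).
Proof. by rewrite filter_uniq // uniq_flat // iota_uniq. Qed.

Lemma mem_words q w : w \in words g q -> weight g w = q.
Proof. by rewrite mem_filter => /andP [/eqP]. Qed.

Lemma weight_cons a w : weight g (a :: w) = (g a + weight g w)%N.
Proof. by rewrite /weight big_cons. Qed.

Lemma size12 q w : (1 <= q)%N -> (q <= 3 * e - 1)%N -> w \in words g q ->
  size w = 1%N \/ size w = 2%N.
Proof.
move=> q1 q2 /mem_words; case: w => [|a [|b [|d w]]]; try by [left | right].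
  by rewrite /weight big_nil => q0; move: q1; rewrite -q0.
rewrite !weight_cons => hw; have := hg a; have := hg b; have := hg d; lia.
Qed.

Lemma size123 q w : (1 <= q)%N -> (q <= 3 * e)%N -> w \in words g q ->
  [\/ size w = 1%N, size w = 2%N | size w = 3%N].
Proof.
move=> q1 q2 /mem_words; case: w => [|a [|b [|d [|f w]]]]; try by constructor.
  by rewrite /weight big_nil => q0; move: q1; rewrite -q0.
rewrite !weight_cons => hw; have := hg a; have := hg b; have := hg d; have := hg f; lia.
Qed.

Lemma sumL (s : seq (seq A)) x (f : seq A -> 'F_2) : uniq s ->
  \sum_(k < size s) (x == nth [::] s k)%:R * f (nth [::] s k) =
  if x \in s then f x else 0.
Proof.
rewrite -(big_mkord xpredT (fun k => (x == nth [::] s k)%:R * f (nth [::] s k))).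
rewrite -(big_nth [::] xpredT (fun y => (x == y)%:R * f y)).
elim: s => [|y s IH] /=; first by rewrite big_nil.
move=> /andP [ys us]; rewrite big_cons IH // in_cons.
case: (eqVneq x y) => [->|nxy] /=; last by rewrite mul0r add0r.
by rewrite (negbTE ys) mul1r addr0.
Qed.

Lemma sumR (s : seq (seq A)) x (f : seq A -> 'F_2) : uniq s ->
  \sum_(k < size s) f (nth [::] s k) * (nth [::] s k == x)%:R =
  if x \in s then f x else 0.
Proof.
move=> us; rewrite -(sumL _ x f us); apply: eq_bigr => k _.
by rewrite mulrC eq_sym.
Qed.

Definition ws (P : nat) q := [seq w <- words g q | size w == P].
Definition EM (P : nat) q : 'M['F_2]_(size (ws P q), size (words g q)) :=
  \matrix_(i, j) (nth [::] (ws P q) i == nth [::] (words g q) j)%:R.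

Lemma uniq_ws P q : uniq (ws P q).
Proof. exact: filter_uniq (uniq_words q). Qed.

Lemma mem_ws P q w : (w \in ws P q) = (w \in words g q) && (size w == P).
Proof. by rewrite mem_filter andbC. Qed.

Lemma EM_orth1 P q : EM P q *m (EM P q)^T = 1%:M.
Proof.
apply/matrixP => i k; rewrite !mxE.
under eq_bigr => j _ do rewrite !mxE.
have hi : nth [::] (ws P q) i \in ws P q by apply: mem_nth.
rewrite (sumL _ _ (fun y => (nth [::] (ws P q) k == y)%:R)) ?uniq_words //.
move: (hi); rewrite mem_ws => /andP [-> _].
by rewrite nth_uniq ?uniq_ws ?ltn_ord // eq_sym.
Qed.

Lemma EM_orth2 P Q q : P != Q -> EM P q *m (EM Q q)^T = 0.
Proof.
move=> nPQ; apply/matrixP => i k; rewrite !mxE.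
under eq_bigr => j _ do rewrite !mxE.
have hi : nth [::] (ws P q) i \in ws P q by apply: mem_nth.
rewrite (sumL _ _ (fun y => (nth [::] (ws Q q) k == y)%:R)) ?uniq_words //.
move: (hi); rewrite mem_ws => /andP [-> sP].
have hk : nth [::] (ws Q q) k \in ws Q q by apply: mem_nth.
move: (hk); rewrite mem_ws => /andP [_ sQ].
case: eqP => // hh; move: sP sQ; rewrite hh => /eqP -> /eqP hQ.
by move: nPQ; rewrite hQ eqxx.
Qed.

Lemma EM_sum q : (1 <= q)%N -> (q <= 3 * e - 1)%N ->
  (EM 1 q)^T *m EM 1 q + (EM 2 q)^T *m EM 2 q = 1%:M.
Proof.
move=> q1 q2; apply/matrixP => j k; rewrite !mxE.
under eq_bigr => i _ do rewrite !mxE eq_sym.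
under [X in _ + X]eq_bigr => i _ do rewrite !mxE eq_sym.
rewrite !(sumL _ _ (fun y => (y == nth [::] (words g q) k)%:R)) ?uniq_ws ?uniq_words //.
have hj : nth [::] (words g q) j \in words g q by apply: mem_nth.
rewrite !mem_ws hj /=.
rewrite nth_uniq ?uniq_words ?ltn_ord //.
by case: (size12 _ _ q1 q2 hj) => ->; rewrite /= ?addr0 ?add0r ?val_eqE.
Qed.

Definition T (u v : seq A) (i j l : nat) : 'F_2 :=
  match drop i u with
  | a :: y => ((take i u == take j v) && (j + l <= size v)%N
           && (y == drop (j + l) v))%:R * cnt g c a (take l (drop j v))
  | [::] => 0 end.
Lemma dcoefE u v : dcoef g c u v =
  \sum_(i < size u) \sum_(j < (size v).+1) \sum_(l < (size v).+1) T u v i j l.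
Proof.
rewrite /dcoef; apply: eq_bigr => i _; rewrite /T.
case: (drop i u) => [|a y] //.
by rewrite big1 // => j _; rewrite big1.
Qed.
Lemma cnt_nil a : cnt g c a [::] = 0.
Proof. by rewrite /cnt /weight big_nil; have := hg a; case: (g a) => [|[|]] //; lia. Qed.
Ltac comp := rewrite dcoefE !big_ord_recl !big_ord0 /T /bump /= -?eqseqE /= ?cnt_nil;
  rewrite ?(mul0r, mulr0, addr0, add0r, andbT, andbF, mul1r).
Lemma dc11 a b : dcoef g c [:: a] [:: b] = cnt g c a [:: b].
Proof. by comp. Qed.
Lemma dc12 a b1 b2 : dcoef g c [:: a] [:: b1; b2] = cnt g c a [:: b1; b2].
Proof. by comp. Qed.
Lemma dc21 a1 a2 b : dcoef g c [:: a1; a2] [:: b] = 0.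
Proof. by comp. Qed.
Lemma dc22 a1 a2 b1 b2 : dcoef g c [:: a1; a2] [:: b1; b2] = d2coef g c [:: a1; a2] [:: b1; b2].
Proof. by comp. Qed.
Lemma dc31 a1 a2 a3 b : dcoef g c [:: a1; a2; a3] [:: b] = 0.
Proof. by comp. Qed.
Lemma dc32 a1 a2 a3 b1 b2 : dcoef g c [:: a1; a2; a3] [:: b1; b2] = 0.
Proof. by comp. Qed.

Lemma weight1 a : weight g [:: a] = g a.
Proof. by rewrite weight_cons /weight big_nil addn0. Qed.

Lemma H1 q : (q.-1 <= 3 * e - 1)%N ->
  EM 1 q *m Dfull g c q q.-1 = dJ g c q q.-1 *m EM 1 q.-1 + deltaJ g c q q.-1 *m EM 2 q.-1.
Proof.
move=> hq; apply/matrixP => i j; rewrite !mxE.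
under [in LHS]eq_bigr => k _ do rewrite !mxE.
under [X in _ = X + _]eq_bigr => k _ do rewrite !mxE.
under [X in _ = _ + X]eq_bigr => k _ do rewrite !mxE.
change (words1 g q) with (ws 1 q); change (words1 g q.-1) with (ws 1 q.-1).
change (words2 g q.-1) with (ws 2 q.-1).
rewrite (sumL _ _ (fun y => dcoef g c y (nth [::] (words g q.-1) j))) ?uniq_words //.
rewrite (sumR _ _ (fun y => d1coef g c (nth [::] (ws 1 q) i) y)) ?uniq_ws //.
rewrite (sumR _ _ (fun y => deltacoef g c (nth [::] (ws 1 q) i) y)) ?uniq_ws //.
have hu : nth [::] (ws 1 q) i \in ws 1 q by apply: mem_nth.
have hv : nth [::] (words g q.-1) j \in words g q.-1 by apply: mem_nth.
move: hu hv; generalize (nth [::] (ws 1 q) i) (nth [::] (words g q.-1) j).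
move=> u v hu0 hv.
have /andP [hu su] : (u \in words g q) && (size u == 1%N) by rewrite -mem_ws.
rewrite hu !mem_ws hv /=.
case: u hu su {hu0} => [|a [|]] //= hu _.
have ga := mem_words _ _ hu; rewrite weight1 in ga.
have q1 : (1 <= q.-1)%N by have := hg a; lia.
case: (size12 _ _ q1 hq hv); case: v hv => [|b [|b2 [|]]] //= _ _.
  by rewrite dc11 addr0.
by rewrite dc12 add0r.
Qed.

Lemma weight2 a b : weight g [:: a; b] = (g a + g b)%N.
Proof. by rewrite !weight_cons /weight big_nil addn0. Qed.

Lemma H2 q : (q.-1 <= 3 * e - 1)%N ->
  EM 2 q *m Dfull g c q q.-1 = dJ2 g c q q.-1 *m EM 2 q.-1.
Proof.
move=> hq; apply/matrixP => i j; rewrite !mxE.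
under [in LHS]eq_bigr => k _ do rewrite !mxE.
under [in RHS]eq_bigr => k _ do rewrite !mxE.
change (words2 g q) with (ws 2 q); change (words2 g q.-1) with (ws 2 q.-1).
rewrite (sumL _ _ (fun y => dcoef g c y (nth [::] (words g q.-1) j))) ?uniq_words //.
rewrite (sumR _ _ (fun y => d2coef g c (nth [::] (ws 2 q) i) y)) ?uniq_ws //.
have hu : nth [::] (ws 2 q) i \in ws 2 q by apply: mem_nth.
have hv : nth [::] (words g q.-1) j \in words g q.-1 by apply: mem_nth.
move: hu hv; generalize (nth [::] (ws 2 q) i) (nth [::] (words g q.-1) j).
move=> u v hu0 hv.
have /andP [hu su] : (u \in words g q) && (size u == 2%N) by rewrite -mem_ws.
rewrite hu !mem_ws hv /=.
case: u hu su {hu0} => [|a1 [|a2 [|]]] //= hu _.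
have ga := mem_words _ _ hu; rewrite weight2 in ga.
have q1 : (1 <= q.-1)%N by have := hg a1; lia.
case: (size12 _ _ q1 hq hv); case: v hv => [|b [|b2 [|]]] //= _ _.
  by rewrite dc21.
by rewrite dc22.
Qed.

Lemma rowEM P q r (i : 'I_(size (words g q))) :
  nth [::] (words g q) i \in ws P q ->
  (row i (Dfull g c q r) <= EM P q *m Dfull g c q r)%MS.
Proof.
move=> hm.
have hk : (index (nth [::] (words g q) i) (ws P q) < size (ws P q))%N by rewrite index_mem.
have -> : row i (Dfull g c q r) = row (Ordinal hk) (EM P q *m Dfull g c q r).
  apply/rowP => j; rewrite !mxE.
  under [in RHS]eq_bigr => k _ do rewrite !mxE.
  rewrite (sumL _ _ (fun y => dcoef g c y (nth [::] (words g r) j))) ?uniq_words //=.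
  by rewrite nth_index // mem_nth.
exact: row_sub.
Qed.

Lemma H5 q : (1 <= q)%N -> (q <= 3 * e - 1)%N ->
  (Dfull g c q.+1 q <= EM 1 q.+1 *m Dfull g c q.+1 q + EM 2 q.+1 *m Dfull g c q.+1 q)%MS.
Proof.
move=> q1 q2; apply/row_subP => i.
have hu : nth [::] (words g q.+1) i \in words g q.+1 by apply: mem_nth.
have q3 : (q.+1 <= 3 * e)%N by lia.
case: (size123 _ _ (ltn0Sn q) q3 hu) => su.
- apply: submx_trans (addsmxSl _ _); apply: rowEM.
  by rewrite mem_ws hu su.
- apply: submx_trans (addsmxSr _ _); apply: rowEM.
  by rewrite mem_ws hu su.
have -> : row i (Dfull g c q.+1 q) = 0; last exact: sub0mx.
apply/rowP => j; rewrite !mxE.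
have hv : nth [::] (words g q) j \in words g q by apply: mem_nth.
move: su hv; generalize (nth [::] (words g q.+1) i) (nth [::] (words g q) j).
move=> u v su hv.
case: (size12 _ _ q1 q2 hv); case: v hv => [|b [|b2 [|]]] //= _ _;
  case: u su => [|a1 [|a2 [|a3 [|]]]] //= _.
  by rewrite dc31.
by rewrite dc32.
Qed.
End C.

Theorem mainTheorem13 (A : finType) (g : A -> nat) (c : A -> seq A -> bool)
    (e : nat) :
  (2 <= e)%N ->
  (forall a : A, (e <= g a)%N) ->
  (forall p : nat, Dfull g c p.+2 p.+1 *m Dfull g c p.+1 p = 0) ->
  forall p : nat, (1 <= p <= 3 * e - 1)%N ->
  LCHdim g c p = (kerDelta g c p + cokerDelta g c p.+1)%N.
Proof.
move=> he hg hD p /andP [p1 p2].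
case: p p1 p2 => [|p] // _ p2.
rewrite /LCHdim /hdim /kerDelta /cokerDelta /=.
have pa : (p.+1.-1 <= 3 * e - 1)%N by rewrite /=; lia.
have pb : (p.+2.-1 <= 3 * e - 1)%N by rewrite /=; lia.
have n12 : (1 != 2 :> nat)%N by [].
have n21 : (2 != 1 :> nat)%N by [].
apply: (abstract_main
  (E1 := EM A g 1 p.+1) (E2 := EM A g 2 p.+1) (F1 := EM A g 1 p) (F2 := EM A g 2 p)
  (G1 := EM A g 1 p.+2) (G2 := EM A g 2 p.+2)).
- exact: (H1 _ _ _ _ he hg _ pa).
- exact: (H2 _ _ _ _ he hg _ pa).
- exact: (H1 _ _ _ _ he hg _ pb).
- exact: (H2 _ _ _ _ he hg _ pb).
- exact: (H5 _ _ _ _ he hg _ (ltn0Sn p) p2).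
- exact: EM_orth1.
- exact: EM_orth1.
- exact: (EM_orth2 _ _ _ _ _ n12).
- exact: (EM_orth2 _ _ _ _ _ n21).
- exact: (EM_sum _ _ _ he hg _ (ltn0Sn p) p2).
- exact: EM_orth1.
- exact: EM_orth1.
- exact: (EM_orth2 _ _ _ _ _ n12).
- exact: (EM_orth2 _ _ _ _ _ n21).
- exact: hD.
Qed.
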